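(* Let $w_1, w_2 \geq 0$ with $w_1 + w_2 > 0$, and let $\sigma\approx 2.14790$ be the unique positive real root of $x^4 - 3x^2 - 3x - 1$. Both for the class of symmetric simultaneous two-player weighted congestion games with affine costs, proportional cost functions and player weights $w_1,w_2$, and for its subclass of network routing games, the price of anarchy (with respect to pure Nash equilibria) is equal to \begin{enumerate} \item[(a)] $\dfrac{ 2w_1^4 + 6w_1^3w_2 + 8w_1^2w_2^2 + 6w_1w_2^3 + 2w_2^4 }{ 2w_1^4 + 3w_1^3w_2 + 4w_1^2w_2^2 + 3w_1w_2^3 + 2w_2^4 + w_1w_2 \min(w_1^2,w_2^2) }$ if $\frac{w_2}{\sigma} \leq w_1 \leq \sigma w_2$; \item[(b)] $\dfrac{ 2w_1^3w_2 + 4w_1^2w_2^2 + 2w_1w_2^3 + 2\max(w_1^4+w_1^3w_2,\,w_1w_2^3+w_2^4) }{ w_1^3w_2 + 2w_1^2w_2^2 + w_1w_2^3 + 2w_1w_2 \min(w_1^2,w_2^2) + 2\max(w_1^4,w_2^4) + \min(w_1^4,w_2^4) }$ if $w_1 \geq \sigma w_2$ or $w_1 \leq \frac{w_2}{\sigma}$. \end{enumerate}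
   Context: A weighted two-player congestion game with affine costs consists of a finite set $R$ of resources, coefficients $\alpha_r,\beta_r \geq 0$ for each $r\in R$, two players $i=1,2$ with weights $w_i\ge 0$, and for each player $i$ a nonempty finite set $\mathcal{A}_i \subseteq 2^R$ of actions; it is symmetric if $\mathcal{A}_1=\mathcal{A}_2$. In a network routing game, $R$ is the arc set of a directed graph, player $i$ has a source $s_i$ and sink $t_i$, and $\mathcal{A}_i$ is the set of arc sets of directed $s_i$–$t_i$ paths (symmetric: common source and common sink). For an action profile $A=(A_1,A_2)$ the load of $r$ is $x_r(A)=\sum_{j:\, r\in A_j} w_j$. With proportional costs, player $i$ pays $C_i(A)=w_i\sum_{r\in A_i}(\alpha_r+\beta_r x_r(A))$. The social cost is $C(A)=C_1(A)+C_2(A)$. A pure Nash equilibrium is a profile from which no player can lower her cost by unilaterally changing her action. The price of anarchy of an instance is the maximum over Nash equilibria $A$ of $C(A)/\min_{A'} C(A')$; the price of anarchy of a class is the supremum over all instances (with positive optimal social cost). *)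

(* Defs.v *)
From HB Require Import structures.
From mathcomp Require Import all_boot all_order all_algebra.
From mathcomp Require Import reals.
Set Implicit Arguments. Unset Strict Implicit. Unset Printing Implicit Defensive.
Import Order.TTheory GRing.Theory Num.Theory.
Local Open Scope ring_scope.

(* A symmetric two-player congestion game with affine costs on resource type T:
   coefficients alpha, beta and the common action set (a predicate on subsets). *)
Record sym_game (R : realType) (T : finType) := SymGame {
  alpha : T -> R;
  beta  : T -> R;
  acts  : {set T} -> Prop }.

Definition wf_game (R : realType) (T : finType) (g : sym_game R T) : Prop :=
  (forall r, 0 <= alpha g r) /\ (forall r, 0 <= beta g r) /\ exists A, acts g A.

Definition load (R : realType) (T : finType) (w1 w2 : R) (A1 A2 : {set T}) (r : T) : R :=
  (if r \in A1 then w1 else 0) + (if r \in A2 then w2 else 0).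

Definition pcost (R : realType) (T : finType) (g : sym_game R T) (w1 w2 wi : R)
    (A1 A2 Ai : {set T}) : R :=
  wi * \sum_(r in Ai) (alpha g r + beta g r * load w1 w2 A1 A2 r).

Definition cost1 R T (g : sym_game R T) (w1 w2 : R) (A1 A2 : {set T}) : R :=
  pcost g w1 w2 w1 A1 A2 A1.
Definition cost2 R T (g : sym_game R T) (w1 w2 : R) (A1 A2 : {set T}) : R :=
  pcost g w1 w2 w2 A1 A2 A2.
Definition social_cost R T (g : sym_game R T) (w1 w2 : R) (A1 A2 : {set T}) : R :=
  cost1 g w1 w2 A1 A2 + cost2 g w1 w2 A1 A2.

Definition feasible R T (g : sym_game R T) (A1 A2 : {set T}) : Prop :=
  acts g A1 /\ acts g A2.

Definition is_NE R T (g : sym_game R T) (w1 w2 : R) (A1 A2 : {set T}) : Prop :=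
  feasible g A1 A2 /\
  (forall B, acts g B -> cost1 g w1 w2 A1 A2 <= cost1 g w1 w2 B A2) /\
  (forall B, acts g B -> cost2 g w1 w2 A1 A2 <= cost2 g w1 w2 A1 B).

Definition is_opt R T (g : sym_game R T) (w1 w2 : R) (O1 O2 : {set T}) : Prop :=
  feasible g O1 O2 /\
  (forall B1 B2, feasible g B1 B2 -> social_cost g w1 w2 O1 O2 <= social_cost g w1 w2 B1 B2).

Definition game_class (R : realType) := forall T : finType, sym_game R T -> Prop.

Definition all_games (R : realType) : game_class R := fun T g => wf_game g.

(* Directed (multi)graph with arc set T, vertex set V, tail/head maps. *)
Fixpoint walk (T V : finType) (tl hd : T -> V) (u : V) (p : seq T) : bool :=
  match p with
  | [::] => true
  | e :: p' => (tl e == u) && walk tl hd (hd e) p'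
  end.

Definition st_path (T V : finType) (tl hd : T -> V) (s t : V) (p : seq T) : bool :=
  [&& walk tl hd s p, last s (map hd p) == t & uniq (s :: map hd p)].

Definition network_games (R : realType) : game_class R := fun T g =>
  wf_game g /\
  exists (V : finType) (tl hd : T -> V) (s t : V),
    forall A : {set T}, acts g A <-> exists p : seq T, st_path tl hd s t p /\ A = [set e in p].

(* The price of anarchy of class cls (for weights w1 w2) equals v:
   v is the supremum of C(A)/C(O) over instances with positive optimal
   social cost, Nash equilibria A, and optima O. *)
Definition PoA_eq (R : realType) (cls : game_class R) (w1 w2 v : R) : Prop :=
  (forall (T : finType) (g : sym_game R T), cls T g ->
     forall A1 A2 O1 O2, is_NE g w1 w2 A1 A2 -> is_opt g w1 w2 O1 O2 ->
       0 < social_cost g w1 w2 O1 O2 ->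
       social_cost g w1 w2 A1 A2 / social_cost g w1 w2 O1 O2 <= v) /\
  (forall eps : R, 0 < eps ->
     exists (T : finType) (g : sym_game R T) A1 A2 O1 O2,
       [/\ cls T g, is_NE g w1 w2 A1 A2, is_opt g w1 w2 O1 O2,
           0 < social_cost g w1 w2 O1 O2 &
           v - eps < social_cost g w1 w2 A1 A2 / social_cost g w1 w2 O1 O2]).

Definition poa_a (R : realType) (w1 w2 : R) : R :=
  (2 * w1 ^+ 4 + 6 * w1 ^+ 3 * w2 + 8 * w1 ^+ 2 * w2 ^+ 2 + 6 * w1 * w2 ^+ 3 + 2 * w2 ^+ 4) /
  (2 * w1 ^+ 4 + 3 * w1 ^+ 3 * w2 + 4 * w1 ^+ 2 * w2 ^+ 2 + 3 * w1 * w2 ^+ 3 + 2 * w2 ^+ 4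
   + w1 * w2 * Num.min (w1 ^+ 2) (w2 ^+ 2)).

Definition poa_b (R : realType) (w1 w2 : R) : R :=
  (2 * w1 ^+ 3 * w2 + 4 * w1 ^+ 2 * w2 ^+ 2 + 2 * w1 * w2 ^+ 3
   + 2 * Num.max (w1 ^+ 4 + w1 ^+ 3 * w2) (w1 * w2 ^+ 3 + w2 ^+ 4)) /
  (w1 ^+ 3 * w2 + 2 * w1 ^+ 2 * w2 ^+ 2 + w1 * w2 ^+ 3 + 2 * w1 * w2 * Num.min (w1 ^+ 2) (w2 ^+ 2)
   + 2 * Num.max (w1 ^+ 4) (w2 ^+ 4) + Num.min (w1 ^+ 4) (w2 ^+ 4)).

(* Main.v *)
Require Import Defs.
From HB Require Import structures.
From mathcomp Require Import all_boot all_order all_algebra.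
From mathcomp Require Import reals.
From mathcomp Require Import ring lra.
Set Implicit Arguments. Unset Strict Implicit. Unset Printing Implicit Defensive.
Import Order.TTheory GRing.Theory Num.Theory.
Local Open Scope ring_scope.


Section Main.
Variable R : realType.


Lemma load_sym (T : finType) (w1 w2 : R) (A1 A2 : {set T}) r :
  load w1 w2 A1 A2 r = load w2 w1 A2 A1 r.
Proof. by rewrite /load addrC. Qed.

Lemma cost1_sym (T : finType) (g : sym_game R T) (w1 w2 : R) A1 A2 :
  cost1 g w1 w2 A1 A2 = cost2 g w2 w1 A2 A1.
Proof.
rewrite /cost1 /cost2 /pcost; congr (_ * _); apply: eq_bigr => r _.
by rewrite load_sym.
Qed.

Lemma cost2_sym (T : finType) (g : sym_game R T) (w1 w2 : R) A1 A2 :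
  cost2 g w1 w2 A1 A2 = cost1 g w2 w1 A2 A1.
Proof.
rewrite /cost1 /cost2 /pcost; congr (_ * _); apply: eq_bigr => r _.
by rewrite load_sym.
Qed.

Lemma sc_sym (T : finType) (g : sym_game R T) (w1 w2 : R) A1 A2 :
  social_cost g w1 w2 A1 A2 = social_cost g w2 w1 A2 A1.
Proof.
rewrite /social_cost addrC; congr (_ + _).
  exact: cost2_sym.
exact: cost1_sym.
Qed.

Lemma NE_sym (T : finType) (g : sym_game R T) (w1 w2 : R) A1 A2 :
  is_NE g w1 w2 A1 A2 -> is_NE g w2 w1 A2 A1.
Proof.
move=> [[h1 h2] [n1 n2]]; split; first by split.
split=> B hB.
- by rewrite -!cost2_sym; apply: n2.
- by rewrite -!cost1_sym; apply: n1.
Qed.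

Lemma opt_sym (T : finType) (g : sym_game R T) (w1 w2 : R) A1 A2 :
  is_opt g w1 w2 A1 A2 -> is_opt g w2 w1 A2 A1.
Proof.
move=> [[h1 h2] n]; split; first by split.
move=> B1 B2 [f1 f2]; rewrite (sc_sym g w2 w1 A2 A1) (sc_sym g w2 w1 B1 B2).
apply: n; by split.
Qed.

Lemma PoA_sym (cls : game_class R) (w1 w2 v : R) :
  PoA_eq cls w1 w2 v -> PoA_eq cls w2 w1 v.
Proof.
move=> [ub lb]; split.
- move=> T g hc A1 A2 O1 O2 hne hopt hpos.
  rewrite (sc_sym g w2 w1 A1 A2) (sc_sym g w2 w1 O1 O2).
  apply: ub => //; first exact: NE_sym.
  + exact: opt_sym.
  + by rewrite -(sc_sym g w2 w1 O1 O2).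
- move=> eps heps; have [T [g [A1 [A2 [O1 [O2 [hc hne hopt hpos hlt]]]]]]] := lb eps heps.
  exists T, g, A2, A1, O2, O1; split => //.
  + exact: NE_sym.
  + exact: opt_sym.
  + by rewrite (sc_sym g w2 w1 O2 O1).
  + by rewrite (sc_sym g w2 w1 O2 O1) (sc_sym g w2 w1 A2 A1).
Qed.




Definition ldb (w1 w2 : R) (x y : bool) : R := (if x then w1 else 0) + (if y then w2 else 0).
Definition tc (w : R) (x : bool) (al be l : R) : R := if x then w * (al + be * l) else 0.

Lemma cost1E (T : finType) (g : sym_game R T) w1 w2 X Y :
  cost1 g w1 w2 X Y = \sum_r tc w1 (r \in X) (alpha g r) (beta g r) (ldb w1 w2 (r \in X) (r \in Y)).
Proof.
rewrite /cost1 /pcost mulr_sumr big_mkcond; apply: eq_bigr => r _.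
by rewrite /tc /load /ldb; case: (r \in X).
Qed.

Lemma cost2E (T : finType) (g : sym_game R T) w1 w2 X Y :
  cost2 g w1 w2 X Y = \sum_r tc w2 (r \in Y) (alpha g r) (beta g r) (ldb w1 w2 (r \in X) (r \in Y)).
Proof.
rewrite /cost2 /pcost mulr_sumr big_mkcond; apply: eq_bigr => r _.
by rewrite /tc /load /ldb; case: (r \in Y).
Qed.

Definition slack (N Dn L1 L2 L4 L5 w1 w2 al be : R) (a1 a2 o1 o2 : bool) : R :=
  N * (tc w1 o1 al be (ldb w1 w2 o1 o2) + tc w2 o2 al be (ldb w1 w2 o1 o2))
  - Dn * (tc w1 a1 al be (ldb w1 w2 a1 a2) + tc w2 a2 al be (ldb w1 w2 a1 a2))
  - L1 * (tc w1 o1 al be (ldb w1 w2 o1 a2) - tc w1 a1 al be (ldb w1 w2 a1 a2))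
  - L2 * (tc w1 o2 al be (ldb w1 w2 o2 a2) - tc w1 a1 al be (ldb w1 w2 a1 a2))
  - L4 * (tc w2 o2 al be (ldb w1 w2 a1 o2) - tc w2 a2 al be (ldb w1 w2 a1 a2))
  - L5 * (tc w2 o1 al be (ldb w1 w2 a1 o1) - tc w2 a2 al be (ldb w1 w2 a1 a2)).

Lemma ub_generic (T : finType) (g : sym_game R T) (w1 w2 N Dn L1 L2 L4 L5 : R) A1 A2 O1 O2 :
  wf_game g -> 0 < Dn -> 0 <= L1 -> 0 <= L2 -> 0 <= L4 -> 0 <= L5 ->
  (forall al be a1 a2 o1 o2, 0 <= al -> 0 <= be ->
     0 <= slack N Dn L1 L2 L4 L5 w1 w2 al be a1 a2 o1 o2) ->
  is_NE g w1 w2 A1 A2 -> feasible g O1 O2 -> 0 < social_cost g w1 w2 O1 O2 ->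
  social_cost g w1 w2 A1 A2 / social_cost g w1 w2 O1 O2 <= N / Dn.
Proof.
move=> [ha [hb _]] hD h1 h2 h4 h5 hsl [[fA1 fA2] [n1 n2]] [fO1 fO2] hpos.
have hs : 0 <= \sum_r slack N Dn L1 L2 L4 L5 w1 w2 (alpha g r) (beta g r)
                 (r \in A1) (r \in A2) (r \in O1) (r \in O2).
  by apply: sumr_ge0 => r _; apply: hsl.
have E : \sum_r slack N Dn L1 L2 L4 L5 w1 w2 (alpha g r) (beta g r)
                 (r \in A1) (r \in A2) (r \in O1) (r \in O2) =
   N * social_cost g w1 w2 O1 O2 - Dn * social_cost g w1 w2 A1 A2
   - L1 * (cost1 g w1 w2 O1 A2 - cost1 g w1 w2 A1 A2)
   - L2 * (cost1 g w1 w2 O2 A2 - cost1 g w1 w2 A1 A2)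
   - L4 * (cost2 g w1 w2 A1 O2 - cost2 g w1 w2 A1 A2)
   - L5 * (cost2 g w1 w2 A1 O1 - cost2 g w1 w2 A1 A2).
  rewrite /social_cost !cost1E !cost2E.
  rewrite -!sumrB -!big_split !mulr_sumr -!sumrB.
  by apply: eq_bigr => r _.
have e1 := n1 O1 fO1. have e2 := n1 O2 fO2. have e4 := n2 O2 fO2. have e5 := n2 O1 fO1.
have p1 : 0 <= L1 * (cost1 g w1 w2 O1 A2 - cost1 g w1 w2 A1 A2)
  by apply: mulr_ge0 => //; rewrite subr_ge0.
have p2 : 0 <= L2 * (cost1 g w1 w2 O2 A2 - cost1 g w1 w2 A1 A2)
  by apply: mulr_ge0 => //; rewrite subr_ge0.
have p4 : 0 <= L4 * (cost2 g w1 w2 A1 O2 - cost2 g w1 w2 A1 A2)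
  by apply: mulr_ge0 => //; rewrite subr_ge0.
have p5 : 0 <= L5 * (cost2 g w1 w2 A1 O1 - cost2 g w1 w2 A1 A2)
  by apply: mulr_ge0 => //; rewrite subr_ge0.
have key : social_cost g w1 w2 A1 A2 * Dn <= N * social_cost g w1 w2 O1 O2.
  rewrite E in hs; lra.
by rewrite ler_pdivrMr // mulrAC ler_pdivlMr.
Qed.

Lemma lin0 (sa sb al be x : R) : 0 <= al -> 0 <= be -> 0 <= sa -> 0 <= sb -> x = sa * al + sb * be -> 0 <= x.
Proof. move=> ha hb hsa hsb ->; apply: addr_ge0; exact: mulr_ge0. Qed.
Arguments lin0 sa sb {al be x}.
Ltac pos := repeat first [done | assumption | apply: ler0n | apply: addr_ge0 | apply: mulr_ge0 | apply: exprn_ge0].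
Definition Qp (a b : R) : R := b^+3 + 2*a*b^+2 + a^+2*b - a^+3.
Definition Qn (a b : R) : R := a^+3 - a^+2*b - 2*a*b^+2 - b^+3.
Definition Da (a b : R) : R := 2*a^+4 + 3*a^+3*b + 4*a^+2*b^+2 + 4*a*b^+3 + 2*b^+4.
Definition L1a (a b : R) : R := 2*a^+4 + 4*a^+3*b + 3*a^+2*b^+2.
Definition L2a (a b : R) : R := 3*a^+2*b^+2 + 4*a*b^+3 + 2*b^+4.
Definition L4a (a b : R) : R := a^+4 + 2*a^+2*b^+2 + 4*a*b^+3 + 2*b^+4.
Definition L5a (a b : R) : R := 3*a^+4 + 4*a^+3*b + 2*a^+2*b^+2.
Definition Va (a b : R) : R := 2*a^+4 + 6*a^+3*b + 8*a^+2*b^+2 + 6*a*b^+3 + 2*b^+4.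
Definition Db (a b : R) : R := 2*a^+4 + a^+3*b + 2*a^+2*b^+2 + 3*a*b^+3 + b^+4.
Definition Vb (a b : R) : R := 2*a^+4 + 4*a^+3*b + 4*a^+2*b^+2 + 2*a*b^+3.
Definition L1b (a b : R) : R := 2*a^+5 + 2*a^+4*b + a^+3*b^+2 - a*b^+4 - b^+5.
Definition L2b (a b : R) : R := a^+3*b^+2 + 4*a^+2*b^+3 + 3*a*b^+4 + b^+5.
Definition L4b (a b : R) : R := a^+5 + a^+3*b^+2 + a^+2*b^+3.
Definition L5b (a b : R) : R := a^+5 + 2*a^+4*b + 5*a^+3*b^+2 + 5*a^+2*b^+3 + 2*a*b^+4.

Lemma slack_a (w1 u w2 al be : R) a1 a2 o1 o2 : w1 = w2 + u -> 0 <= u -> 0 <= w2 -> 0 <= Qp w1 w2 ->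
  0 <= al -> 0 <= be ->
  0 <= slack (Va w1 w2) (Da w1 w2) (L1a w1 w2) (L2a w1 w2)
             (L4a w1 w2) (L5a w1 w2) w1 w2 al be a1 a2 o1 o2.
Proof.
move=> -> hu hw hQ hal hbe.
rewrite /slack /Va /Da /L1a /L2a /L4a /L5a.
case: a1; case: a2; case: o1; case: o2; rewrite /tc /ldb /=.
- apply: (lin0 (3*u^+4*w2 + 19*u^+3*w2^+2 + 45*u^+2*w2^+3 + 47*u*w2^+4 + 18*w2^+5) (3*u^+5*w2 + 25*u^+4*w2^+2 + 83*u^+3*w2^+3 + 137*u^+2*w2^+4 + 112*u*w2^+5 + 36*w2^+6) hal hbe); [pos | pos | (try rewrite /Qp); (try rewrite /Qn); ring].
- apply: (lin0 (2*u^+4*w2 + 12*u^+3*w2^+2 + 28*u^+2*w2^+3 + 30*u*w2^+4 + 12*w2^+5) (0) hal hbe); [pos | pos | (try rewrite /Qp); (try rewrite /Qn); ring].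
- apply: (lin0 (4*u^+4*w2 + 22*u^+3*w2^+2 + 44*u^+2*w2^+3 + 38*u*w2^+4 + 12*w2^+5) (2*u^+5*w2 + 14*u^+4*w2^+2 + 36*u^+3*w2^+3 + 40*u^+2*w2^+4 + 16*u*w2^+5) hal hbe); [pos | pos | (try rewrite /Qp); (try rewrite /Qn); ring].
- apply: (lin0 (3*u^+4*w2 + 15*u^+3*w2^+2 + 27*u^+2*w2^+3 + 21*u*w2^+4 + 6*w2^+5) (3*u^+5*w2 + 21*u^+4*w2^+2 + 57*u^+3*w2^+3 + 75*u^+2*w2^+4 + 48*u*w2^+5 + 12*w2^+6) hal hbe); [pos | pos | (try rewrite /Qp); (try rewrite /Qn); ring].
- apply: (lin0 (u^+4*w2 + 10*u^+3*w2^+2 + 30*u^+2*w2^+3 + 36*u*w2^+4 + 15*w2^+5) (3*u^+5*w2 + 25*u^+4*w2^+2 + 86*u^+3*w2^+3 + 150*u^+2*w2^+4 + 131*u*w2^+5 + 45*w2^+6) hal hbe); [pos | pos | (try rewrite /Qp); (try rewrite /Qn); ring].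
- apply: (lin0 (3*u^+3*w2^+2 + 13*u^+2*w2^+3 + 19*u*w2^+4 + 9*w2^+5) (0) hal hbe); [pos | pos | (try rewrite /Qp); (try rewrite /Qn); ring].
- apply: (lin0 (2*u^+4*w2 + 13*u^+3*w2^+2 + 29*u^+2*w2^+3 + 27*u*w2^+4 + 9*w2^+5) (0) hal hbe); [pos | pos | (try rewrite /Qp); (try rewrite /Qn); ring].
- apply: (lin0 (u^+4*w2 + 6*u^+3*w2^+2 + 12*u^+2*w2^+3 + 10*u*w2^+4 + 3*w2^+5) (u^+5*w2 + 7*u^+4*w2^+2 + 18*u^+3*w2^+3 + 22*u^+2*w2^+4 + 13*u*w2^+5 + 3*w2^+6) hal hbe); [pos | pos | (try rewrite /Qp); (try rewrite /Qn); ring].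
- apply: (lin0 (2*u^+4*w2 + 13*u^+3*w2^+2 + 33*u^+2*w2^+3 + 37*u*w2^+4 + 15*w2^+5) (4*u^+5*w2 + 30*u^+4*w2^+2 + 95*u^+3*w2^+3 + 157*u^+2*w2^+4 + 133*u*w2^+5 + 45*w2^+6) hal hbe); [pos | pos | (try rewrite /Qp); (try rewrite /Qn); ring].
- apply: (lin0 (u^+4*w2 + 6*u^+3*w2^+2 + 16*u^+2*w2^+3 + 20*u*w2^+4 + 9*w2^+5) (0) hal hbe); [pos | pos | (try rewrite /Qp); (try rewrite /Qn); ring].
- apply: (lin0 (3*u^+4*w2 + 16*u^+3*w2^+2 + 32*u^+2*w2^+3 + 28*u*w2^+4 + 9*w2^+5) (0) hal hbe); [pos | pos | (try rewrite /Qp); (try rewrite /Qn); ring].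
- apply: (lin0 (2*u^+4*w2 + 9*u^+3*w2^+2 + 15*u^+2*w2^+3 + 11*u*w2^+4 + 3*w2^+5) (2*u^+4*w2^+2 + 9*u^+3*w2^+3 + 15*u^+2*w2^+4 + 11*u*w2^+5 + 3*w2^+6) hal hbe); [pos | pos | (try rewrite /Qp); (try rewrite /Qn); ring].
- apply: (lin0 (4*u^+3*w2^+2 + 18*u^+2*w2^+3 + 26*u*w2^+4 + 12*w2^+5) (6*u^+5*w2 + 42*u^+4*w2^+2 + 128*u^+3*w2^+3 + 208*u^+2*w2^+4 + 176*u*w2^+5 + 60*w2^+6) hal hbe); [pos | pos | (try rewrite /Qp); (try rewrite /Qn); ring].
- apply: (lin0 ((w2+u)*w2*(Qp (w2+u) w2 + 2*(w2+u)*w2^+2 + w2^+3)) (2*u^+5*w2 + 12*u^+4*w2^+2 + 30*u^+3*w2^+3 + 38*u^+2*w2^+4 + 24*u*w2^+5 + 6*w2^+6) hal hbe); [pos | pos | (try rewrite /Qp); (try rewrite /Qn); ring].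
- apply: (lin0 (u^+4*w2 + 7*u^+3*w2^+2 + 17*u^+2*w2^+3 + 17*u*w2^+4 + 6*w2^+5) (2*(w2+u)*w2^+2*Qp (w2+u) w2) hal hbe); [pos | pos | (try rewrite /Qp); (try rewrite /Qn); ring].
- apply: (lin0 (0) (0) hal hbe); [pos | pos | (try rewrite /Qp); (try rewrite /Qn); ring].
Qed.

Lemma slack_b (w1 u w2 al be : R) a1 a2 o1 o2 : w1 = 2*w2 + u -> 0 <= u -> 0 <= w2 -> 0 <= Qn w1 w2 ->
  0 <= al -> 0 <= be ->
  0 <= slack (w1 * Vb w1 w2) (w1 * Db w1 w2) (L1b w1 w2) (L2b w1 w2)
             (L4b w1 w2) (L5b w1 w2) w1 w2 al be a1 a2 o1 o2.
Proof.
move=> -> hu hw hQ hal hbe.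
rewrite /slack /Vb /Db /L1b /L2b /L4b /L5b.
case: a1; case: a2; case: o1; case: o2; rewrite /tc /ldb /=.
- apply: (lin0 (3*u^+5*w2 + 35*u^+4*w2^+2 + 161*u^+3*w2^+3 + 364*u^+2*w2^+4 + 403*u*w2^+5 + 174*w2^+6) (3*u^+6*w2 + 44*u^+5*w2^+2 + 266*u^+4*w2^+3 + 847*u^+3*w2^+4 + 1495*u^+2*w2^+5 + 1383*u*w2^+6 + 522*w2^+7) hal hbe); [pos | pos | (try rewrite /Qp); (try rewrite /Qn); ring].
- apply: (lin0 (2*u^+5*w2 + 22*u^+4*w2^+2 + 98*u^+3*w2^+3 + 220*u^+2*w2^+4 + 248*u*w2^+5 + 112*w2^+6) (0) hal hbe); [pos | pos | (try rewrite /Qp); (try rewrite /Qn); ring].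
- apply: (lin0 (2*u^+5*w2 + 24*u^+4*w2^+2 + 116*u^+3*w2^+3 + 282*u^+2*w2^+4 + 344*u*w2^+5 + 168*w2^+6) (2*u^+5*w2^+2 + 24*u^+4*w2^+3 + 116*u^+3*w2^+4 + 282*u^+2*w2^+5 + 344*u*w2^+6 + 168*w2^+7) hal hbe); [pos | pos | (try rewrite /Qp); (try rewrite /Qn); ring].
- apply: (lin0 (u^+5*w2 + 11*u^+4*w2^+2 + 53*u^+3*w2^+3 + 138*u^+2*w2^+4 + 189*u*w2^+5 + 106*w2^+6) (u^+6*w2 + 14*u^+5*w2^+2 + 86*u^+4*w2^+3 + 297*u^+3*w2^+4 + 603*u^+2*w2^+5 + 673*u*w2^+6 + 318*w2^+7) hal hbe); [pos | pos | (try rewrite /Qp); (try rewrite /Qn); ring].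
- apply: (lin0 (3*u^+5*w2 + 34*u^+4*w2^+2 + 149*u^+3*w2^+3 + 313*u^+2*w2^+4 + 310*u*w2^+5 + 112*w2^+6) (5*u^+6*w2 + 68*u^+5*w2^+2 + 383*u^+4*w2^+3 + 1139*u^+3*w2^+4 + 1876*u^+2*w2^+5 + 1610*u*w2^+6 + 556*w2^+7) hal hbe); [pos | pos | (try rewrite /Qp); (try rewrite /Qn); ring].
- apply: (lin0 (2*u^+5*w2 + 21*u^+4*w2^+2 + 86*u^+3*w2^+3 + 169*u^+2*w2^+4 + 155*u*w2^+5 + 50*w2^+6) (2*(2*w2+u)*w2*((2*w2+u)^+2 + (2*w2+u)*w2 + w2^+2)*Qn (2*w2+u) w2) hal hbe); [pos | pos | (try rewrite /Qp); (try rewrite /Qn); ring].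
- apply: (lin0 (2*u^+5*w2 + 23*u^+4*w2^+2 + 104*u^+3*w2^+3 + 231*u^+2*w2^+4 + 251*u*w2^+5 + 106*w2^+6) (0) hal hbe); [pos | pos | (try rewrite /Qp); (try rewrite /Qn); ring].
- apply: (lin0 (u^+5*w2 + 10*u^+4*w2^+2 + 41*u^+3*w2^+3 + 87*u^+2*w2^+4 + 96*u*w2^+5 + 44*w2^+6) (u^+6*w2 + 12*u^+5*w2^+2 + 61*u^+4*w2^+3 + 169*u^+3*w2^+4 + 270*u^+2*w2^+5 + 236*u*w2^+6 + 88*w2^+7) hal hbe); [pos | pos | (try rewrite /Qp); (try rewrite /Qn); ring].
- apply: (lin0 (2*u^+5*w2 + 25*u^+4*w2^+2 + 120*u^+3*w2^+3 + 277*u^+2*w2^+4 + 307*u*w2^+5 + 130*w2^+6) (4*u^+6*w2 + 56*u^+5*w2^+2 + 327*u^+4*w2^+3 + 1016*u^+3*w2^+4 + 1765*u^+2*w2^+5 + 1619*u*w2^+6 + 610*w2^+7) hal hbe); [pos | pos | (try rewrite /Qp); (try rewrite /Qn); ring].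
- apply: (lin0 (u^+5*w2 + 12*u^+4*w2^+2 + 57*u^+3*w2^+3 + 133*u^+2*w2^+4 + 152*u*w2^+5 + 68*w2^+6) (0) hal hbe); [pos | pos | (try rewrite /Qp); (try rewrite /Qn); ring].
- apply: (lin0 (u^+5*w2 + 14*u^+4*w2^+2 + 75*u^+3*w2^+3 + 195*u^+2*w2^+4 + 248*u*w2^+5 + 124*w2^+6) (0) hal hbe); [pos | pos | (try rewrite /Qp); (try rewrite /Qn); ring].
- apply: (lin0 (u^+4*w2^+2 + 12*u^+3*w2^+3 + 51*u^+2*w2^+4 + 93*u*w2^+5 + 62*w2^+6) (u^+4*w2^+3 + 12*u^+3*w2^+4 + 51*u^+2*w2^+5 + 93*u*w2^+6 + 62*w2^+7) hal hbe); [pos | pos | (try rewrite /Qp); (try rewrite /Qn); ring].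
- apply: (lin0 (2*u^+5*w2 + 24*u^+4*w2^+2 + 108*u^+3*w2^+3 + 226*u^+2*w2^+4 + 214*u*w2^+5 + 68*w2^+6) (6*u^+6*w2 + 82*u^+5*w2^+2 + 468*u^+4*w2^+3 + 1424*u^+3*w2^+4 + 2428*u^+2*w2^+5 + 2190*u*w2^+6 + 812*w2^+7) hal hbe); [pos | pos | (try rewrite /Qp); (try rewrite /Qn); ring].
- apply: (lin0 (u^+5*w2 + 11*u^+4*w2^+2 + 45*u^+3*w2^+3 + 82*u^+2*w2^+4 + 59*u*w2^+5 + 6*w2^+6) (2*u^+6*w2 + 26*u^+5*w2^+2 + 140*u^+4*w2^+3 + 396*u^+3*w2^+4 + 612*u^+2*w2^+5 + 478*u*w2^+6 + 140*w2^+7) hal hbe); [pos | pos | (try rewrite /Qp); (try rewrite /Qn); ring].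
- apply: (lin0 (u^+5*w2 + 13*u^+4*w2^+2 + 63*u^+3*w2^+3 + 144*u^+2*w2^+4 + 155*u*w2^+5 + 62*w2^+6) (0) hal hbe); [pos | pos | (try rewrite /Qp); (try rewrite /Qn); ring].
- apply: (lin0 (0) (0) hal hbe); [pos | pos | (try rewrite /Qp); (try rewrite /Qn); ring].
Qed.

End Main.
Section S2.
Variable R : realType.
Ltac pos := repeat first [done | assumption | apply: ler0n | apply: addr_ge0 | apply: mulr_ge0 | apply: exprn_ge0].

Lemma sigma_facts (s : R) : 0 < s -> s ^+ 4 - 3 * s ^+ 2 - 3 * s - 1 = 0 ->
  s ^+ 3 - s ^+ 2 - 2 * s - 1 = 0 /\ 2 <= s.
Proof.
move=> hs E.
have C : s ^+ 3 - s ^+ 2 - 2 * s - 1 = 0.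
  have : (s + 1) * (s ^+ 3 - s ^+ 2 - 2 * s - 1) = 0 by rewrite -E; ring.
  move/eqP; rewrite mulf_eq0 => /orP [/eqP h|/eqP //]; lra.
split => //.
rewrite leNgt; apply/negP => h.
have h1 : 0 < 2 - s by lra.
have h2 : 0 < s * (2 - s) * (s + 1) by apply: mulr_gt0 => //; [apply: mulr_gt0 | lra].
have : s ^+ 3 - s ^+ 2 - 2 * s - 1 = - (s * (2 - s) * (s + 1)) - 1 by ring.
lra.
Qed.

Lemma Qp_ge0 (s w1 w2 : R) : 0 <= w2 -> w2 <= w1 -> w1 <= s * w2 ->
  s ^+ 3 - s ^+ 2 - 2 * s - 1 = 0 -> 2 <= s -> 0 <= Qp w1 w2.
Proof.
move=> hw2 h21 h1s C hs2.
have -> : Qp w1 w2 = (s * w2 - w1) * (w1 * (w1 - w2) + w1 * (s * w2) + (s * w2 - 2 * w2) * (s * w2 + w2))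
   - w2 ^+ 3 * (s ^+ 3 - s ^+ 2 - 2 * s - 1) by rewrite /Qp; ring.
rewrite C mulr0 subr0.
have ha : 0 <= s * w2 - w1 by lra.
have hb : 0 <= w1 - w2 by lra.
have hc : 0 <= s * w2 - 2 * w2 by nra.
have hw1 : 0 <= w1 by lra.
have hs : 0 <= s by lra.
pos.
Qed.

Lemma Qn_ge0 (s w1 w2 : R) : 0 <= w2 -> s * w2 <= w1 ->
  s ^+ 3 - s ^+ 2 - 2 * s - 1 = 0 -> 2 <= s -> 0 <= Qn w1 w2.
Proof.
move=> hw2 h1s C hs2.
have -> : Qn w1 w2 = (w1 - s * w2) * (w1 * (w1 - w2) + w1 * (s * w2) + (s * w2 - 2 * w2) * (s * w2 + w2))
   + w2 ^+ 3 * (s ^+ 3 - s ^+ 2 - 2 * s - 1) by rewrite /Qn; ring.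
rewrite C mulr0 addr0.
have ha : 0 <= w1 - s * w2 by lra.
have hc : 0 <= s * w2 - 2 * w2 by nra.
have hb : 0 <= w1 - w2 by nra.
have hw1 : 0 <= w1 by nra.
have hs : 0 <= s by lra.
pos.
Qed.

Lemma ub_a (T : finType) (g : sym_game R T) (w1 w2 : R) A1 A2 O1 O2 :
  0 <= w2 -> w2 <= w1 -> 0 < w1 -> 0 <= Qp w1 w2 ->
  wf_game g -> is_NE g w1 w2 A1 A2 -> feasible g O1 O2 -> 0 < social_cost g w1 w2 O1 O2 ->
  social_cost g w1 w2 A1 A2 / social_cost g w1 w2 O1 O2 <= Va w1 w2 / Da w1 w2.
Proof.
move=> hw2 h21 hw1 hQ hwf hne hf hpos.
have hw1' : 0 <= w1 by lra.
apply: (ub_generic (L1 := L1a w1 w2) (L2 := L2a w1 w2) (L4 := L4a w1 w2) (L5 := L5a w1 w2) hwf _ _ _ _ _ _ hne hf hpos).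
- rewrite /Da. have h4 : 0 < w1 ^+ 4 := exprn_gt0 4 hw1.
  have : 0 <= 3*w1^+3*w2 + 4*w1^+2*w2^+2 + 4*w1*w2^+3 + 2*w2^+4 by pos.
  lra.
- rewrite /L1a; pos.
- rewrite /L2a; pos.
- rewrite /L4a; pos.
- rewrite /L5a; pos.
- move=> al be a1 a2 o1 o2 hal hbe.
  apply: (slack_a (u := w1 - w2)) => //; [ring | lra].
Qed.

Lemma L1b_ge0 (w1 w2 : R) : 0 <= w2 -> 2 * w2 <= w1 -> 0 <= L1b w1 w2.
Proof.
move=> hw2 h; have hu : 0 <= w1 - 2 * w2 by lra.
move: hu; set u := w1 - 2 * w2 => hu.
have -> : w1 = 2 * w2 + u by rewrite /u; ring.
have -> : L1b (2 * w2 + u) w2 = 2*u^+5 + 22*u^+4*w2 + 97*u^+3*w2^+2 + 214*u^+2*w2^+3 + 235*u*w2^+4 + 101*w2^+5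
  by rewrite /L1b; ring.
pos.
Qed.

Lemma ub_b (T : finType) (g : sym_game R T) (w1 w2 : R) A1 A2 O1 O2 :
  0 <= w2 -> 2 * w2 <= w1 -> 0 < w1 -> 0 <= Qn w1 w2 ->
  wf_game g -> is_NE g w1 w2 A1 A2 -> feasible g O1 O2 -> 0 < social_cost g w1 w2 O1 O2 ->
  social_cost g w1 w2 A1 A2 / social_cost g w1 w2 O1 O2 <= Vb w1 w2 / Db w1 w2.
Proof.
move=> hw2 h21 hw1 hQ hwf hne hf hpos.
have hw1' : 0 <= w1 by lra.
have hD : 0 < Db w1 w2.
  rewrite /Db. have h4 : 0 < w1 ^+ 4 := exprn_gt0 4 hw1.
  have : 0 <= w1^+3*w2 + 2*w1^+2*w2^+2 + 3*w1*w2^+3 + w2^+4 by pos.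
  lra.
have -> : Vb w1 w2 / Db w1 w2 = (w1 * Vb w1 w2) / (w1 * Db w1 w2).
  rewrite invfM mulrACA mulfV ?mul1r //; lra.
apply: (ub_generic (L1 := L1b w1 w2) (L2 := L2b w1 w2) (L4 := L4b w1 w2) (L5 := L5b w1 w2) hwf _ _ _ _ _ _ hne hf hpos).
- exact: mulr_gt0.
- exact: L1b_ge0.
- rewrite /L2b; pos.
- rewrite /L4b; pos.
- rewrite /L5b; pos.
- move=> al be a1 a2 o1 o2 hal hbe.
  apply: (slack_b (u := w1 - 2 * w2)) => //; [ring | lra].
Qed.
End S2.
Notation o7 n := (@Ordinal 7 n isT).
Notation o5 n := (@Ordinal 5 n isT).
Notation o4 n := (@Ordinal 4 n isT).

Fixpoint seqs (T : eqType) (l : seq T) (n : nat) : seq (seq T) :=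
  if n is n'.+1 then [::] :: [seq e :: p | e <- l, p <- @seqs T l n'] else [:: [::]].
Lemma mem_seqs (T : eqType) (l : seq T) n (p : seq T) : (forall e, e \in l) -> (size p <= n)%N -> p \in seqs l n.
Proof.
move=> hl; elim: n p => [|n IH] [|e p] //=.
move=> hs; rewrite in_cons /=; apply/allpairsP; exists (e, p) => /=.
by rewrite hl IH.
Qed.
Lemma st_path_size (T V : finType) (tl hd : T -> V) s t p :
  st_path tl hd s t p -> (size p < #|V|)%N.
Proof.
case/and3P => _ _ hu.
have := card_uniqP hu; rewrite /= size_map => <-.
exact: max_card.
Qed.
Lemma ordeqE n i j (hi : (i < n)%N) (hj : (j < n)%N) : (Ordinal hi == Ordinal hj) = (i == j)%N.
Proof. by []. Qed.
Definition allI7 : seq 'I_7 := [:: o7 0; o7 1; o7 2; o7 3; o7 4; o7 5; o7 6].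
Lemma allI7v : map val allI7 = iota 0 7. Proof. by []. Qed.
Lemma allI7P e : e \in allI7.
Proof. by rewrite -(mem_map val_inj) allI7v mem_iota ltn_ord. Qed.
Definition allI5 : seq 'I_5 := [:: o5 0; o5 1; o5 2; o5 3; o5 4].
Lemma allI5v : map val allI5 = iota 0 5. Proof. by []. Qed.
Lemma allI5P e : e \in allI5.
Proof. by rewrite -(mem_map val_inj) allI5v mem_iota ltn_ord. Qed.

Section LB.
Variable R : realType.
Ltac pos := repeat first [done | assumption | apply: ler0n | apply: addr_ge0 | apply: mulr_ge0 | apply: exprn_ge0].

Lemma eqge0 (P x : R) : 0 <= P -> x = P -> 0 <= x.
Proof. by move=> h ->. Qed.

Lemma sum_list n (F : 'I_n -> R) (l : seq 'I_n) :
  map val l = iota 0 n -> \sum_r F r = \sum_(r <- l) F r.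
Proof.
move=> hl.
have -> : l = enum 'I_n by apply: (inj_map val_inj); rewrite val_enum_ord.
by rewrite big_enum.
Qed.

Definition memo n (i : 'I_n) (p : seq 'I_n) : bool := has (fun e => eqn (val i) (val e)) p.
Lemma memoP n (i : 'I_n) p : (i \in [set e in p]) = memo i p.
Proof. rewrite inE /memo; elim: p => //= e p IH; by rewrite in_cons IH. Qed.
Lemma cost1_seq n (g : sym_game R 'I_n) w1 w2 (p q : seq 'I_n) l : map val l = iota 0 n ->
  cost1 g w1 w2 [set e in p] [set e in q] =
  \sum_(r <- l) tc w1 (memo r p) (alpha g r) (beta g r) (ldb w1 w2 (memo r p) (memo r q)).
Proof. move=> hl; rewrite cost1E (sum_list _ hl); apply: eq_bigr => r _; by rewrite !memoP. Qed.
Lemma cost2_seq n (g : sym_game R 'I_n) w1 w2 (p q : seq 'I_n) l : map val l = iota 0 n ->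
  cost2 g w1 w2 [set e in p] [set e in q] =
  \sum_(r <- l) tc w2 (memo r q) (alpha g r) (beta g r) (ldb w1 w2 (memo r p) (memo r q)).
Proof. move=> hl; rewrite cost2E (sum_list _ hl); apply: eq_bigr => r _; by rewrite !memoP. Qed.

Definition net_game (T V : finType) (tl hd : T -> V) (s t : V) (bet : T -> R) : sym_game R T :=
  SymGame (fun _ => 0) bet (fun A => exists p, st_path tl hd s t p /\ A = [set e in p]).

Definition lb_prop (cls : game_class R) (w1 w2 v : R) :=
  forall eps : R, 0 < eps ->
     exists (T : finType) (g : sym_game R T) A1 A2 O1 O2,
       [/\ cls T g, is_NE g w1 w2 A1 A2, is_opt g w1 w2 O1 O2,
           0 < social_cost g w1 w2 O1 O2 &
           v - eps < social_cost g w1 w2 A1 A2 / social_cost g w1 w2 O1 O2].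

Lemma lb_net (T V : finType) (tl hd : T -> V) (s t : V) (bet : T -> R) (L : seq (seq T))
    (p1 p2 q1 q2 : seq T) (w1 w2 v : R) :
  (forall e, 0 <= bet e) ->
  (forall p, st_path tl hd s t p -> p \in L) ->
  all (st_path tl hd s t) [:: p1; p2; q1; q2] ->
  let g := net_game tl hd s t bet in
  (forall q, q \in L -> cost1 g w1 w2 [set e in p1] [set e in p2] <= cost1 g w1 w2 [set e in q] [set e in p2]) ->
  (forall q, q \in L -> cost2 g w1 w2 [set e in p1] [set e in p2] <= cost2 g w1 w2 [set e in p1] [set e in q]) ->
  (forall r1 r2, r1 \in L -> r2 \in L ->
     social_cost g w1 w2 [set e in q1] [set e in q2] <= social_cost g w1 w2 [set e in r1] [set e in r2]) ->
  0 < social_cost g w1 w2 [set e in q1] [set e in q2] ->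
  social_cost g w1 w2 [set e in p1] [set e in p2] / social_cost g w1 w2 [set e in q1] [set e in q2] = v ->
  lb_prop (@network_games R) w1 w2 v.
Proof.
move=> hb hL /and5P [hp1 hp2 hq1 hq2 _] g n1 n2 op hpos hv eps heps.
have act : forall p, st_path tl hd s t p -> acts g [set e in p] by move=> p hp; exists p.
exists T, g, [set e in p1], [set e in p2], [set e in q1], [set e in q2]; split.
- split; first by split => //; split=> // ; exists [set e in p1]; exact: act.
  by exists V, tl, hd, s, t.
- split; first by split; apply: act.
  split=> B [p [hp ->]]; [exact: n1 (hL _ hp) | exact: n2 (hL _ hp)].
- split; first by split; apply: act.
  by move=> B1 B2 [[r1 [hr1 ->]] [r2 [hr2 ->]]]; apply: op; apply: hL.
- exact: hpos.
- by rewrite hv; lra.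
Qed.

Lemma lb_all (w1 w2 v : R) : lb_prop (@network_games R) w1 w2 v -> lb_prop (@all_games R) w1 w2 v.
Proof.
move=> h eps heps; have [T [g [A1 [A2 [O1 [O2 [hc ? ? ? ?]]]]]]] := h eps heps.
by exists T, g, A1, A2, O1, O2; split => //; case: hc.
Qed.
End LB.

Definition tlA (e : 'I_7) : 'I_5 :=
  match val e with 0 => o5 2 | 1 => o5 0 | 2 => o5 0 | 3 => o5 4 | 4 => o5 3 | 5 => o5 4 | _ => o5 2 end.
Definition hdA (e : 'I_7) : 'I_5 :=
  match val e with 0 => o5 1 | 1 => o5 3 | 2 => o5 2 | 3 => o5 1 | 4 => o5 4 | 5 => o5 2 | _ => o5 3 end.
Definition pO1A : seq 'I_7 := [:: o7 1; o7 4; o7 3].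
Definition pA2A : seq 'I_7 := [:: o7 1; o7 4; o7 5; o7 0].
Definition pO2A : seq 'I_7 := [:: o7 2; o7 0].
Definition pA1A : seq 'I_7 := [:: o7 2; o7 6; o7 4; o7 3].
Definition pathsA : seq (seq 'I_7) := [:: pO1A; pA2A; pO2A; pA1A].
Lemma pathsA_ok : all (fun p => st_path tlA hdA (o5 0) (o5 1) p ==> (p \in pathsA)) (seqs allI7 4).
Proof. vm_compute. reflexivity. Qed.
Lemma pathsA_all p : st_path tlA hdA (o5 0) (o5 1) p -> p \in pathsA.
Proof.
move=> hp; have hs := st_path_size hp; rewrite card_ord in hs.
have := allP pathsA_ok p (mem_seqs allI7P hs).
by rewrite hp.
Qed.

Section InstA.
Variable R : realType.
Ltac pos := repeat first [done | assumption | apply: ler0n | apply: addr_ge0 | apply: mulr_ge0 | apply: exprn_ge0].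
Definition betA (w1 w2 : R) (e : 'I_7) : R :=
  match val e with 0 => (w1+w2)^+2 | 1 => w1*(w1+w2) | 2 => (w1+w2)^+2 | 3 => w2*(w1+w2)
  | 4 => w1^+2+w1*w2+w2^+2 | _ => 0 end.
Lemma ratio_eq (x y n d : R) : y != 0 -> d != 0 -> x * d = n * y -> x / y = n / d.
Proof. move=> hy hd h. by rewrite -(mulfK hd x) h mulrAC mulfK. Qed.
Lemma eqgt0 (P Q x : R) : 0 < P -> 0 <= Q -> x = P + Q -> 0 < x.
Proof. move=> hP hQ ->; exact: ltr_wpDr. Qed.

Ltac ev := rewrite /social_cost ?(cost1_seq _ _ _ _ _ allI7v) ?(cost2_seq _ _ _ _ _ allI7v) !big_cons !big_nil /= /tc /ldb /betA /=.

Lemma lbA (w1 w2 u : R) : w1 = w2 + u -> 0 <= u -> 0 <= w2 -> 0 < w1 ->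
  lb_prop (@network_games R) w1 w2 (Va w1 w2 / Da w1 w2).
Proof.
move=> -> hu hw hw1.
have hw1' : 0 <= w2 + u by lra.
have hSO : 0 < social_cost (net_game tlA hdA (o5 0) (o5 1) (betA (w2+u) w2)) (w2+u) w2 [set e in pO1A] [set e in pO2A].
  ev. apply: (eqgt0 (P := 2*(w2+u)^+4) (Q := (3*u^+3*w2 + 13*u^+2*w2^+2 + 21*u*w2^+3 + 13*w2^+4))); [exact/mulr_gt0/exprn_gt0 | pos | ring].
apply: (lb_net (tl := tlA) (hd := hdA) (s := o5 0) (t := o5 1) (bet := betA (w2+u) w2) (L := pathsA) (p1 := pA1A) (p2 := pA2A) (q1 := pO1A) (q2 := pO2A)) => //.
- move=> e; rewrite /betA; case: (val e) => [|[|[|[|[|?]]]]] /=; pos.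
- exact: pathsA_all.
- move=> q; rewrite !inE => /or4P [] /eqP ->; ev.
- rewrite -subr_ge0; apply: (eqge0 (P := 0)); [pos | ring].
- rewrite -subr_ge0; apply: (eqge0 (P := u^+4 + 6*u^+3*w2 + 14*u^+2*w2^+2 + 15*u*w2^+3 + 6*w2^+4)); [pos | ring].
- rewrite -subr_ge0; apply: (eqge0 (P := 0)); [pos | ring].
- rewrite -subr_ge0; apply: (eqge0 (P := 0)); [pos | ring].
- move=> q; rewrite !inE => /or4P [] /eqP ->; ev.
- rewrite -subr_ge0; apply: (eqge0 (P := 0)); [pos | ring].
- rewrite -subr_ge0; apply: (eqge0 (P := 0)); [pos | ring].
- rewrite -subr_ge0; apply: (eqge0 (P := 0)); [pos | ring].
- rewrite -subr_ge0; apply: (eqge0 (P := u^+3*w2 + 5*u^+2*w2^+2 + 9*u*w2^+3 + 6*w2^+4)); [pos | ring].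
- move=> r1 r2; rewrite !inE => /or4P [] /eqP -> /or4P [] /eqP ->; ev.
- rewrite -subr_ge0; apply: (eqge0 (P := 4*u^+3*w2 + 18*u^+2*w2^+2 + 27*u*w2^+3 + 13*w2^+4)); [pos | ring].
- rewrite -subr_ge0; apply: (eqge0 (P := 4*u^+3*w2 + 17*u^+2*w2^+2 + 24*u*w2^+3 + 11*w2^+4)); [pos | ring].
- rewrite -subr_ge0; apply: (eqge0 (P := 0)); [pos | ring].
- rewrite -subr_ge0; apply: (eqge0 (P := 2*u^+3*w2 + 10*u^+2*w2^+2 + 18*u*w2^+3 + 11*w2^+4)); [pos | ring].
- rewrite -subr_ge0; apply: (eqge0 (P := u^+4 + 9*u^+3*w2 + 25*u^+2*w2^+2 + 28*u*w2^+3 + 11*w2^+4)); [pos | ring].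
- rewrite -subr_ge0; apply: (eqge0 (P := u^+4 + 11*u^+3*w2 + 36*u^+2*w2^+2 + 47*u*w2^+3 + 21*w2^+4)); [pos | ring].
- rewrite -subr_ge0; apply: (eqge0 (P := u^+4 + 7*u^+3*w2 + 19*u^+2*w2^+2 + 23*u*w2^+3 + 10*w2^+4)); [pos | ring].
- rewrite -subr_ge0; apply: (eqge0 (P := u^+4 + 7*u^+3*w2 + 17*u^+2*w2^+2 + 19*u*w2^+3 + 9*w2^+4)); [pos | ring].
- rewrite -subr_ge0; apply: (eqge0 (P := u^+3*w2 + 3*u^+2*w2^+2 + 2*u*w2^+3)); [pos | ring].
- rewrite -subr_ge0; apply: (eqge0 (P := 3*u^+3*w2 + 14*u^+2*w2^+2 + 21*u*w2^+3 + 10*w2^+4)); [pos | ring].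
- rewrite -subr_ge0; apply: (eqge0 (P := 5*u^+3*w2 + 23*u^+2*w2^+2 + 35*u*w2^+3 + 17*w2^+4)); [pos | ring].
- rewrite -subr_ge0; apply: (eqge0 (P := 3*u^+3*w2 + 13*u^+2*w2^+2 + 19*u*w2^+3 + 10*w2^+4)); [pos | ring].
- rewrite -subr_ge0; apply: (eqge0 (P := 3*u^+3*w2 + 14*u^+2*w2^+2 + 22*u*w2^+3 + 11*w2^+4)); [pos | ring].
- rewrite -subr_ge0; apply: (eqge0 (P := 3*u^+3*w2 + 13*u^+2*w2^+2 + 19*u*w2^+3 + 9*w2^+4)); [pos | ring].
- rewrite -subr_ge0; apply: (eqge0 (P := 3*u^+3*w2 + 14*u^+2*w2^+2 + 21*u*w2^+3 + 10*w2^+4)); [pos | ring].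
- rewrite -subr_ge0; apply: (eqge0 (P := 5*u^+3*w2 + 24*u^+2*w2^+2 + 39*u*w2^+3 + 21*w2^+4)); [pos | ring].
- apply: ratio_eq; first by rewrite gt_eqF.
  + rewrite /Da gt_eqF //. have h4 : 0 < (w2+u) ^+ 4 := exprn_gt0 4 hw1.
    have : 0 <= 3*(w2+u)^+3*w2 + 4*(w2+u)^+2*w2^+2 + 4*(w2+u)*w2^+3 + 2*w2^+4 by pos.
    lra.
  + ev; rewrite /Va /Da; ring.
Qed.
End InstA.

Definition tlB (e : 'I_5) : 'I_4 :=
  match val e with 0 => o4 0 | 1 => o4 3 | 2 => o4 2 | 3 => o4 0 | _ => o4 3 end.
Definition hdB (e : 'I_5) : 'I_4 :=
  match val e with 0 => o4 2 | 1 => o4 1 | 2 => o4 1 | 3 => o4 3 | _ => o4 2 end.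
Definition pO2B : seq 'I_5 := [:: o5 0; o5 2].
Definition pA2B : seq 'I_5 := [:: o5 3; o5 1].
Definition pA1B : seq 'I_5 := [:: o5 3; o5 4; o5 2].
Definition pathsB : seq (seq 'I_5) := [:: pO2B; pA2B; pA1B].
Lemma pathsB_ok : all (fun p => st_path tlB hdB (o4 0) (o4 1) p ==> (p \in pathsB)) (seqs allI5 3).
Proof. vm_compute. reflexivity. Qed.
Lemma pathsB_all p : st_path tlB hdB (o4 0) (o4 1) p -> p \in pathsB.
Proof.
move=> hp; have hs := st_path_size hp; rewrite card_ord in hs.
have := allP pathsB_ok p (mem_seqs allI5P hs).
by rewrite hp.
Qed.

Section InstB.
Variable R : realType.
Ltac pos := repeat first [done | assumption | apply: ler0n | apply: addr_ge0 | apply: mulr_ge0 | apply: exprn_ge0].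
Definition betB (w1 w2 : R) (e : 'I_5) : R :=
  match val e with 0 => (w1^+2+w1*w2+w2^+2)*(w1+w2) | 1 => w1*(w1^+2-w2^+2) | 2 => (w1^+2-w2^+2)*(w1+w2)
  | 3 => w1*(w1^+2+w1*w2+w2^+2) | _ => 0 end.
Lemma ratio_eqB (x y n d : R) : y != 0 -> d != 0 -> x * d = n * y -> x / y = n / d.
Proof. move=> hy hd h. by rewrite -(mulfK hd x) h mulrAC mulfK. Qed.
Lemma eqgt0B (P Q x : R) : 0 < P -> 0 <= Q -> x = P + Q -> 0 < x.
Proof. move=> hP hQ ->; exact: ltr_wpDr. Qed.

Ltac ev := rewrite /social_cost ?(cost1_seq _ _ _ _ _ allI5v) ?(cost2_seq _ _ _ _ _ allI5v) !big_cons !big_nil /= /tc /ldb /betB /=.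

Lemma lbB (w1 w2 u : R) : w1 = 2 * w2 + u -> 0 <= u -> 0 <= w2 -> 0 < w1 ->
  lb_prop (@network_games R) w1 w2 (Vb w1 w2 / Db w1 w2).
Proof.
move=> -> hu hw hw1.
have hw1' : 0 <= 2 * w2 + u by lra.
have hSO : 0 < social_cost (net_game tlB hdB (o4 0) (o4 1) (betB (2*w2+u) w2)) (2*w2+u) w2 [set e in pA2B] [set e in pO2B].
  ev. apply: (eqgt0B (P := (2*w2+u)^+5) (Q := (u^+5 + 11*u^+4*w2 + 50*u^+3*w2^+2 + 119*u^+2*w2^+3 + 149*u*w2^+4 + 78*w2^+5))); [exact/exprn_gt0 | pos | ring].
apply: (lb_net (tl := tlB) (hd := hdB) (s := o4 0) (t := o4 1) (bet := betB (2*w2+u) w2) (L := pathsB) (p1 := pA1B) (p2 := pA2B) (q1 := pA2B) (q2 := pO2B)) => //.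
- move=> e; rewrite /betB; case: (val e) => [|[|[|[|?]]]] /=.
  - apply: (eqge0 (P := (u^+3 + 8*u^+2*w2 + 22*u*w2^+2 + 21*w2^+3))); [pos | ring].
  - apply: (eqge0 (P := (u^+3 + 6*u^+2*w2 + 11*u*w2^+2 + 6*w2^+3))); [pos | ring].
  - apply: (eqge0 (P := (u^+3 + 7*u^+2*w2 + 15*u*w2^+2 + 9*w2^+3))); [pos | ring].
  - apply: (eqge0 (P := (u^+3 + 7*u^+2*w2 + 17*u*w2^+2 + 14*w2^+3))); [pos | ring].
  - apply: (eqge0 (P := (0))); [pos | ring].
- exact: pathsB_all.
- move=> q; rewrite !inE => /or3P [] /eqP ->; ev.
- rewrite -subr_ge0; apply: (eqge0 (P := 0)); [pos | ring].
- rewrite -subr_ge0; apply: (eqge0 (P := 0)); [pos | ring].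
- rewrite -subr_ge0; apply: (eqge0 (P := 0)); [pos | ring].
- move=> q; rewrite !inE => /or3P [] /eqP ->; ev.
- rewrite -subr_ge0; apply: (eqge0 (P := 0)); [pos | ring].
- rewrite -subr_ge0; apply: (eqge0 (P := 0)); [pos | ring].
- rewrite -subr_ge0; apply: (eqge0 (P := u^+4*w2 + 9*u^+3*w2^+2 + 30*u^+2*w2^+3 + 43*u*w2^+4 + 21*w2^+5)); [pos | ring].
- move=> r1 r2; rewrite !inE => /or3P [] /eqP -> /or3P [] /eqP ->; ev.
- rewrite -subr_ge0; apply: (eqge0 (P := 6*u^+4*w2 + 55*u^+3*w2^+2 + 188*u^+2*w2^+3 + 284*u*w2^+4 + 160*w2^+5)); [pos | ring].
- rewrite -subr_ge0; apply: (eqge0 (P := 2*u^+4*w2 + 17*u^+3*w2^+2 + 52*u^+2*w2^+3 + 67*u*w2^+4 + 30*w2^+5)); [pos | ring].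
- rewrite -subr_ge0; apply: (eqge0 (P := 4*u^+4*w2 + 35*u^+3*w2^+2 + 111*u^+2*w2^+3 + 149*u*w2^+4 + 69*w2^+5)); [pos | ring].
- rewrite -subr_ge0; apply: (eqge0 (P := 0)); [pos | ring].
- rewrite -subr_ge0; apply: (eqge0 (P := 4*u^+4*w2 + 34*u^+3*w2^+2 + 106*u^+2*w2^+3 + 143*u*w2^+4 + 70*w2^+5)); [pos | ring].
- rewrite -subr_ge0; apply: (eqge0 (P := 2*u^+4*w2 + 18*u^+3*w2^+2 + 61*u^+2*w2^+3 + 91*u*w2^+4 + 49*w2^+5)); [pos | ring].
- rewrite -subr_ge0; apply: (eqge0 (P := 3*u^+4*w2 + 26*u^+3*w2^+2 + 81*u^+2*w2^+3 + 106*u*w2^+4 + 48*w2^+5)); [pos | ring].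
- rewrite -subr_ge0; apply: (eqge0 (P := 3*u^+4*w2 + 26*u^+3*w2^+2 + 83*u^+2*w2^+3 + 115*u*w2^+4 + 58*w2^+5)); [pos | ring].
- rewrite -subr_ge0; apply: (eqge0 (P := 5*u^+4*w2 + 44*u^+3*w2^+2 + 142*u^+2*w2^+3 + 197*u*w2^+4 + 97*w2^+5)); [pos | ring].
- apply: ratio_eqB; first by rewrite gt_eqF.
  + rewrite /Db gt_eqF //. have h4 : 0 < (2*w2+u) ^+ 4 := exprn_gt0 4 hw1.
    have : 0 <= (2*w2+u)^+3*w2 + 2*(2*w2+u)^+2*w2^+2 + 3*(2*w2+u)*w2^+3 + w2^+4 by pos.
    lra.
  + ev; rewrite /Vb /Db; ring.
Qed.
End InstB.

Section Fin.
Variable R : realType.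
Ltac pos := repeat first [done | assumption | apply: ler0n | apply: addr_ge0 | apply: mulr_ge0 | apply: exprn_ge0].

Lemma le_pow (x y : R) n : 0 <= y -> y <= x -> y ^+ n <= x ^+ n.
Proof.
move=> hy hyx; elim: n => [|n IH]; first by rewrite !expr0.
rewrite !exprS; apply: ler_pM => //; exact: exprn_ge0.
Qed.

Lemma max4 (w1 w2 : R) : 0 <= w2 -> w2 <= w1 -> w1*w2^+3 + w2^+4 <= w1^+4 + w1^+3*w2.
Proof.
move=> hw h; have [u hu ->] : exists2 u, 0 <= u & w1 = w2 + u by exists (w1 - w2); [lra | ring].
rewrite -subr_ge0; apply: (eqge0 (P := u^+4 + 5*u^+3*w2 + 9*u^+2*w2^+2 + 6*u*w2^+3)); [pos | ring].
Qed.

Lemma pa_eq (w1 w2 : R) : 0 <= w2 -> w2 <= w1 -> poa_a w1 w2 = Va w1 w2 / Da w1 w2.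
Proof.
move=> hw h; rewrite /poa_a min_r; last exact: le_pow.
by congr (_ / _); rewrite /Va /Da; ring.
Qed.

Lemma pa_eq' (w1 w2 : R) : 0 <= w1 -> w1 <= w2 -> poa_a w1 w2 = Va w2 w1 / Da w2 w1.
Proof.
move=> hw h; rewrite /poa_a min_l; last exact: le_pow.
by congr (_ / _); rewrite /Va /Da; ring.
Qed.

Lemma pb_eq (w1 w2 : R) : 0 <= w2 -> w2 <= w1 -> poa_b w1 w2 = Vb w1 w2 / Db w1 w2.
Proof.
move=> hw h.
have e1 : Num.max (w1 ^+ 4 + w1 ^+ 3 * w2) (w1 * w2 ^+ 3 + w2 ^+ 4) = w1 ^+ 4 + w1 ^+ 3 * w2.
  by apply: max_l; apply: max4.
have e2 : Num.min (w1 ^+ 2) (w2 ^+ 2) = w2 ^+ 2 by apply: min_r; apply: le_pow.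
have e3 : Num.max (w1 ^+ 4) (w2 ^+ 4) = w1 ^+ 4 by apply: max_l; apply: le_pow.
have e4 : Num.min (w1 ^+ 4) (w2 ^+ 4) = w2 ^+ 4 by apply: min_r; apply: le_pow.
rewrite /poa_b e1 e2 e3 e4.
by congr (_ / _); rewrite /Vb /Db; ring.
Qed.

Lemma pb_eq' (w1 w2 : R) : 0 <= w1 -> w1 <= w2 -> poa_b w1 w2 = Vb w2 w1 / Db w2 w1.
Proof.
move=> hw h.
have e1 : Num.max (w1 ^+ 4 + w1 ^+ 3 * w2) (w1 * w2 ^+ 3 + w2 ^+ 4) = w2 ^+ 4 + w2 ^+ 3 * w1.
  rewrite max_r; first by ring.
  have := max4 hw h; lra.
have e2 : Num.min (w1 ^+ 2) (w2 ^+ 2) = w1 ^+ 2 by apply: min_l; apply: le_pow.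
have e3 : Num.max (w1 ^+ 4) (w2 ^+ 4) = w2 ^+ 4 by apply: max_r; apply: le_pow.
have e4 : Num.min (w1 ^+ 4) (w2 ^+ 4) = w1 ^+ 4 by apply: min_l; apply: le_pow.
rewrite /poa_b e1 e2 e3 e4.
by congr (_ / _); rewrite /Vb /Db; ring.
Qed.

Lemma core (w1 w2 s : R) : 0 <= w2 -> w2 <= w1 -> 0 < w1 -> 0 < s ->
  s ^+ 4 - 3 * s ^+ 2 - 3 * s - 1 = 0 ->
  (w1 <= s * w2 ->
     PoA_eq (@all_games R) w1 w2 (Va w1 w2 / Da w1 w2) /\
     PoA_eq (@network_games R) w1 w2 (Va w1 w2 / Da w1 w2)) /\
  (s * w2 <= w1 ->
     PoA_eq (@all_games R) w1 w2 (Vb w1 w2 / Db w1 w2) /\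
     PoA_eq (@network_games R) w1 w2 (Vb w1 w2 / Db w1 w2)).
Proof.
move=> hw2 h21 hw1 hs E.
have [C hs2] := sigma_facts hs E.
split=> hreg.
- have hQ := Qp_ge0 hw2 h21 hreg C hs2.
  have hlb : lb_prop (@network_games R) w1 w2 (Va w1 w2 / Da w1 w2).
    by apply: (lbA (u := w1 - w2)) => //; [ring | lra].
  split; split.
  + move=> T g hc A1 A2 O1 O2 hne [hf _] hpos; exact: ub_a.
  + exact: lb_all.
  + move=> T g [hc _] A1 A2 O1 O2 hne [hf _] hpos; exact: ub_a.
  + exact: hlb.
- have hQ := Qn_ge0 hw2 hreg C hs2.
  have h2 : 2 * w2 <= w1 by nra.
  have hlb : lb_prop (@network_games R) w1 w2 (Vb w1 w2 / Db w1 w2).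
    by apply: (lbB (u := w1 - 2 * w2)) => //; [ring | lra].
  split; split.
  + move=> T g hc A1 A2 O1 O2 hne [hf _] hpos; exact: ub_b.
  + exact: lb_all.
  + move=> T g [hc _] A1 A2 O1 O2 hne [hf _] hpos; exact: ub_b.
  + exact: hlb.
Qed.
End Fin.

Unset Implicit Arguments.
Theorem theorem5 (R : realType) (w1 w2 sigma : R) :
  0 <= w1 -> 0 <= w2 -> 0 < w1 + w2 ->
  0 < sigma -> sigma ^+ 4 - 3 * sigma ^+ 2 - 3 * sigma - 1 = 0 ->
  (w2 / sigma <= w1 <= sigma * w2 ->
     PoA_eq (@all_games R) w1 w2 (poa_a w1 w2) /\
     PoA_eq (@network_games R) w1 w2 (poa_a w1 w2)) /\
  ((sigma * w2 <= w1 \/ w1 <= w2 / sigma) ->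
     PoA_eq (@all_games R) w1 w2 (poa_b w1 w2) /\
     PoA_eq (@network_games R) w1 w2 (poa_b w1 w2)).
Proof.
move=> h1 h2 h12 hs E.
have [C hs2] := sigma_facts hs E.
case: (lerP w2 w1) => hw.
- have hw1 : 0 < w1 by lra.
  have [ca cb] := core h2 hw hw1 hs E.
  rewrite (pa_eq h2 hw) (pb_eq h2 hw); split.
  + by move=> /andP [_ h]; apply: ca.
  + move=> [h|h]; first exact: cb.
    exfalso; rewrite ler_pdivlMr // in h; nra.
- have hw2 : 0 < w2 by lra.
  have [ca cb] := core h1 (ltW hw) hw2 hs E.
  rewrite (pa_eq' h1 (ltW hw)) (pb_eq' h1 (ltW hw)); split.
  + move=> /andP [h _]; rewrite ler_pdivrMr // in h.
    have [u1 u2] := ca ltac:(lra).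
    by split; apply: PoA_sym.
  + move=> [h|h]; first by exfalso; nra.
    rewrite ler_pdivlMr // in h.
    have [u1 u2] := cb ltac:(lra).
    by split; apply: PoA_sym.
Qed.
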